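(* Let $(X_1,Y_1),\dots,(X_{n+m},Y_{n+m})$ be exchangeable with $Y_i\in\mathbb{R}$, $s:\mathcal{X}\to[0,1]$ a fixed score, $c\in\mathbb{R}$, and binary risk $L_i=\mathbf{1}\{Y_i\le c\}$. For $\gamma>0$ let $E'_{\gamma,n+j}=E_{\gamma,n+j}(1)$, $j=1,\dots,m$, and let $\mathcal{S}'$ be the output of the e-BH procedure at level $\alpha\in(0,1)$ applied to $\{E'_{\gamma,n+j}\}_{j=1}^m$. Then (i) $\mathcal{S}'$ satisfies $\mathbb{E}\big[\sum_{j\in\mathcal{S}'}L_{n+j}/(1\vee|\mathcal{S}'|)\big]\le\alpha$; (ii) if $\gamma=\alpha$, then $\mathcal{S}'=\mathcal{S}^{\mathrm{CS}}$.
   Context: Let $\mathcal{M}=\{s(X_i)\}_{i=1}^{n+m}$; $\mathrm{FR}_{n+j}(t;\ell)=\frac{\ell\mathbf{1}\{s(X_{n+j})\le t\}+\sum_{i=1}^nL_i\mathbf{1}\{s(X_i)\le t\}}{1+\sum_{k\ne j}\mathbf{1}\{s(X_{n+k})\le t\}}\cdot\frac{m}{n+1}$; $t_{\gamma,n+j}(\ell)=\max\{t\in\mathcal{M}:\mathrm{FR}_{n+j}(t;\ell)\le\gamma\}$ ($\max\emptyset=-\infty$); $E_{\gamma,n+j}(\ell)=\frac{(n+1)\mathbf{1}\{s(X_{n+j})\le t_{\gamma,n+j}(\ell)\}}{\ell\mathbf{1}\{s(X_{n+j})\le t_{\gamma,n+j}(\ell)\}+\sum_{i=1}^nL_i\mathbf{1}\{s(X_i)\le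 t_{\gamma,n+j}(\ell)\}}$ (ratio $0$ if numerator $0$, $+\infty$ if numerator positive and denominator $0$). The e-BH procedure at level $\alpha$ on $E_1,\dots,E_m$: $\hat\tau=\max\{\tau\in\{1,\dots,m\}:\sum_j\mathbf{1}\{E_j\ge m/(\alpha\tau)\}\ge\tau\}$ ($0$ if empty), selecting $\{j:E_j\ge m/(\alpha\hat\tau)\}$ (empty if $\hat\tau=0$). $\mathcal{S}^{\mathrm{CS}}$ is the Benjamini–Hochberg output at level $\alpha$ on the conformal p-values $p_j=\frac{1+\sum_{i=1}^n\mathbf{1}\{V(X_i,Y_i)\le V(X_{n+j},c)\}}{n+1}$, $V(x,y)=\infty\cdot\mathbf{1}\{y>c\}+s(x)$ (with $\infty\cdot0=0$). *)

(* Defs.v *)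
From HB Require Import structures.
From mathcomp Require Import all_boot all_order all_algebra fingroup perm.
From mathcomp Require Import all_classical all_reals all_analysis.
Set Implicit Arguments. Unset Strict Implicit. Unset Printing Implicit Defensive.
Import Order.TTheory GRing.Theory Num.Theory.
Local Open Scope ring_scope.

Section Defs.
Variable R : realType.

Definition ind (b : bool) : R := b%:R.

Definition Lrisk (c y : R) : R := ind (y <= c).

(* 1{x <= t} for an extended-real threshold t (t = -oo means max of empty set) *)
Definition ileE (x : R) (t : \bar R) : R := ind (x%:E <= t)%E.

Variables (n m : nat).
(* Indices: calibration i : 'I_n is  lshift m i  (= i in 1..n),
   test j : 'I_m is  rshift n j  (= n+j). *)

Definition FR (S Y : 'I_(n + m) -> R) (c : R) (j : 'I_m) (t l : R) : R :=
  (l * ind (S (rshift n j) <= t)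
     + \sum_(i < n) Lrisk c (Y (lshift m i)) * ind (S (lshift m i) <= t))
  / (1 + \sum_(k < m | k != j) ind (S (rshift n k) <= t))
  * (m%:R / (n.+1)%:R).

Definition thr (S Y : 'I_(n + m) -> R) (c gamma : R) (j : 'I_m) (l : R)
  : \bar R :=
  \big[Order.max/-oo%E]_(i < n + m | FR S Y c j (S i) l <= gamma) (S i)%:E.

Definition Evalue (S Y : 'I_(n + m) -> R) (c gamma : R) (j : 'I_m) (l : R)
  : \bar R :=
  let t := thr S Y c gamma j l in
  let num := (n.+1)%:R * ileE (S (rshift n j)) t in
  let den := l * ileE (S (rshift n j)) t
     + \sum_(i < n) Lrisk c (Y (lshift m i)) * ileE (S (lshift m i)) t in
  if num == 0 then 0%E else if den == 0 then +oo%E else (num / den)%:E.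

End Defs.
Arguments ind {R}.

Section Procedures.
Variable R : realType.
Variable m : nat.

Definition ebh_tau (alpha : R) (E : 'I_m -> \bar R) : nat :=
  \max_(tau < m.+1 | (0 < tau)%N &&
      (tau <= #|[set j | ((m%:R / (alpha * tau%:R))%:E <= E j)%E]|)%N) tau.

Definition ebh_sel (alpha : R) (E : 'I_m -> \bar R) : {set 'I_m} :=
  let tau := ebh_tau alpha E in
  if tau == 0%N then finset.set0
  else [set j | ((m%:R / (alpha * tau%:R))%:E <= E j)%E].

Definition bh_k (alpha : R) (p : 'I_m -> R) : nat :=
  \max_(k < m.+1 | (0 < k)%N &&
      (k <= #|[set j | (p j <= alpha * k%:R / m%:R)%R]|)%N) k.

Definition bh_sel (alpha : R) (p : 'I_m -> R) : {set 'I_m} :=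
  let k := bh_k alpha p in
  if k == 0%N then finset.set0 else [set j | p j <= alpha * k%:R / m%:R].

Definition fdp (L : 'I_m -> R) (Sel : {set 'I_m}) : R :=
  (\sum_(j in Sel) L j) / Num.max 1 (#|Sel|%:R).

End Procedures.

(* nonconformity score V(x,y) = oo * 1{y > c} + s(x)  (oo * 0 = 0) *)
Definition Vscore (R : realType) (T : Type) (s : T -> R) (c : R) (x : T) (y : R)
  : \bar R := if c < y then +oo%E else (s x)%:E.

Definition pconf (R : realType) (T : Type) (n m : nat) (s : T -> R) (c : R)
  (Xs : 'I_(n + m) -> T) (Ys : 'I_(n + m) -> R) (j : 'I_m) : R :=
  (1 + \sum_(i < n) ind ((Vscore s c (Xs (lshift m i)) (Ys (lshift m i))
                          <= Vscore s c (Xs (rshift n j)) c)%E))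
  / (n.+1)%:R.

(* Stated on measurable rectangles prod_i (A_i x B_i), which form a pi-system
   generating the product sigma-algebra, hence equivalently on all events. *)
Definition exchangeable (R : realType) d (Omega : measurableType d)
  (P : probability Omega R) dX (X : measurableType dX) (N : nat)
  (Xd : 'I_N -> Omega -> X) (Yd : 'I_N -> Omega -> R) : Prop :=
  forall (sigma : {perm 'I_N}) (A : 'I_N -> set X) (B : 'I_N -> set R),
    (forall i, measurable (A i)) -> (forall i, measurable (B i)) ->
    P [set w | forall i, A i (Xd (sigma i) w) /\ B i (Yd (sigma i) w)]%classic
    = P [set w | forall i, A i (Xd i w) /\ B i (Yd i w)]%classic.

(* Main.v *)
Require Import Defs.
From HB Require Import structures.
From mathcomp Require Import all_boot all_order all_algebra fingroup perm.
From mathcomp Require Import all_classical all_reals all_analysis.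
From mathcomp Require Import measurable_realfun lebesgue_integral_nonneg lra ring.

Import Order.TTheory GRing.Theory Num.Theory.
Import numFieldNormedType.Exports.
Local Open Scope ring_scope.
Local Open Scope classical_set_scope.
Set Implicit Arguments. Unset Strict Implicit. Unset Printing Implicit Defensive.

Section MeasHelpers.
Context d (T : measurableType d) (R : realType).

Lemma mind (b : T -> bool) : measurable_fun [set: T] b ->
  measurable_fun [set: T] (fun x => (ind (b x) : R)).
Proof.
move=> mb; rewrite /ind.
rewrite (_ : (fun x => _) = (fun x => if b x then 1 else 0)); last first.
  by apply/funext => x; case: (b x).
by apply: measurable_fun_ifT => //; exact: measurable_cst.
Qed.

Lemma mexists k (P : 'I_k -> T -> bool) :
  (forall r, measurable_fun [set: T] (P r)) ->
  measurable_fun [set: T] (fun x => [exists r, P r x]).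
Proof.
move=> mP; apply: (measurable_fun_bool true) => //.
rewrite setTI (_ : _ @^-1` _ = \bigcup_(r in [set: 'I_k]) (P r @^-1` [set true])).
  apply: fin_bigcup_measurable; first exact: finite_finset.
  by move=> r _; rewrite -[X in measurable X]setTI; exact: mP.
apply/seteqP; split => x /=.
  by move/existsP => [r Pr]; exists r.
by move=> [r _ Pr]; apply/existsP; exists r.
Qed.

Lemma minv : measurable_fun [set: R] (@GRing.inv R).
Proof.
move=> _ B mB; rewrite setTI.
have -> : (@GRing.inv R) @^-1` B =
   ([set~ 0] `&` (@GRing.inv R) @^-1` B) `|` ([set 0] `&` (@GRing.inv R) @^-1` B).
  apply/seteqP; split => x /=.
    move=> Bx; case: (eqVneq x 0) => [x0|/eqP x0]; [right|left]; split => //.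
  by case => -[_ ?].
apply: measurableU.
  have o0 : open [set~ (0:R)].
    by apply: closed_openC; apply: accessible_closed_set1; exact: hausdorff_accessible.
  have : measurable_fun [set~ (0:R)] (@GRing.inv R).
    apply: open_continuous_measurable_fun => //.
    by apply/in_setP => x /= x0; apply: inv_continuous; apply/eqP.
  by move=> /(_ (open_measurable o0) B mB).
have [B0|B0] := pselect (B 0).
  rewrite (_ : _ `&` _ = [set 0]) //; apply/seteqP; split => x /=.
    by move=> [].
  by move=> ->; split => //; rewrite invr0.
rewrite (_ : _ `&` _ = set0) //; apply/seteqP; split => x //=.
by move=> [-> ]; rewrite invr0.
Qed.

Lemma mfinv (f : T -> R) : measurable_fun [set: T] f ->
  measurable_fun [set: T] (fun x => (f x)^-1).
Proof. by move=> mf; apply: measurableT_comp => //; exact: minv. Qed.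

End MeasHelpers.

Definition ZT (R : realType) (N : nat) := {ffun 'I_N -> R * R}.
HB.instance Definition _ R N := Choice.on (ZT R N).
HB.instance Definition _ (R : realType) N := isPointed.Build (ZT R N) [ffun=> (0,0)].

Section ZSpace.
Variables (R : realType) (N : nat).
Definition G0 : set (set (ZT R N)) :=
  [set S | exists (A B : 'I_N -> set R), (forall i, measurable (A i)) /\ (forall i, measurable (B i)) /\
     S = (fun z : ZT R N => forall i, A i (z i).1 /\ B i (z i).2)].
Definition Z := g_sigma_algebraType G0.

Lemma mcoord1 i : measurable_fun [set: Z] (fun z : Z => (z i).1).
Proof.
move=> _ B mB; rewrite setTI; apply: sub_sigma_algebra.
exists (fun k => if k == i then B else setT), (fun _ => setT); split.
  by move=> k; case: eqP.
split => //; apply/seteqP; split => z /=.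
  by move=> Bz k; case: eqP => [->|]; split.
by move=> /(_ i) []; rewrite eqxx.
Qed.

Lemma mcoord2 i : measurable_fun [set: Z] (fun z : Z => (z i).2).
Proof.
move=> _ B mB; rewrite setTI; apply: sub_sigma_algebra.
exists (fun _ => setT), (fun k => if k == i then B else setT); split => //.
split; first by move=> k; case: eqP.
apply/seteqP; split => z /=.
  by move=> Bz k; case: eqP => [->|]; split.
by move=> /(_ i) []; rewrite eqxx.
Qed.

Variables (d : measure_display) (Omega : measurableType d) (P : probability Omega R).
Variables (dX : measure_display) (X : measurableType dX).
Variables (Xd : 'I_N -> Omega -> X) (Yd : 'I_N -> Omega -> R) (s : X -> R).
Hypothesis mXd : forall i, measurable_fun [set: Omega] (Xd i).
Hypothesis mYd : forall i, measurable_fun [set: Omega] (Yd i).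
Hypothesis ms : measurable_fun [set: X] s.

Definition dataf (sigma : {perm 'I_N}) (w : Omega) : Z :=
  [ffun i => (s (Xd (sigma i) w), Yd (sigma i) w)].

Lemma mdata sigma : measurable_fun [set: Omega] (dataf sigma).
Proof.
apply: (@measurability _ _ Omega Z setT (dataf sigma) G0).
  by [].

move=> _ [S [A [B [mA [mB ->]]]] <-].
rewrite setTI (_ : _ @^-1` _ = \bigcap_(i in [set: 'I_N])
   ((s \o Xd (sigma i)) @^-1` A i `&` Yd (sigma i) @^-1` B i)).
  apply: fin_bigcap_measurable; first exact: finite_finset.
  move=> i _; apply: measurableI.
    rewrite -[X in measurable X]setTI; apply: (measurableT_comp ms (mXd _)) => //.
  by rewrite -[X in measurable X]setTI; apply: mYd.
apply/seteqP; split => w /=.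
  by move=> h i _; have := h i; rewrite !ffunE.
by move=> h i; rewrite !ffunE; exact: h.
Qed.

Definition pf (f : Omega -> Z) (mf : measurable_fun setT f) : {measure set Z -> \bar R}.
refine (pushforward P f). exact mf. Defined.

Hypothesis exch : exchangeable P Xd Yd.

Lemma exch_meas sigma A : measurable A ->
  P (dataf sigma @^-1` A) = P (dataf 1 @^-1` A).
Proof.
move=> mA.
have := @measure_unique _ R Z G0 (fun _ => setT) erefl _ _ _ (pf (mdata sigma)) (pf (mdata 1)) _ _ A mA.
apply.
- move=> _ _ [A1 [B1 [mA1 [mB1 ->]]]] [A2 [B2 [mA2 [mB2 ->]]]].
  exists (fun i => A1 i `&` A2 i), (fun i => B1 i `&` B2 i); split.
    by move=> i; apply: measurableI.
  split; first by move=> i; apply: measurableI.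
  apply/seteqP; split => z /=.
    by move=> [h1 h2] i; have [? ?] := h1 i; have [? ?] := h2 i.
  by move=> h; split => i; have [[? ?] [? ?]] := h i.
- move=> _; exists (fun _ => setT), (fun _ => setT); split => //; split => //.
  by apply/seteqP; split.
- by apply/seteqP; split => // z _; exists 0%N.
- move=> _ [A1 [B1 [mA1 [mB1 ->]]]]; rewrite /pf /= /pushforward.
  have mA' : forall i, measurable (s @^-1` A1 i).
    by move=> i; rewrite -[X in measurable X]setTI; apply: ms.
  have := @exch sigma (fun i => s @^-1` A1 i) B1 mA' mB1.
  move=> ex.
  rewrite [LHS](_ : _ = P [set w | forall i, (s @^-1` A1 i) (Xd (sigma i) w) /\ B1 i (Yd (sigma i) w)]); last first.
    by congr (P _); apply/seteqP; split => w /= h i; move: (h i); rewrite ffunE.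
  rewrite ex; congr (P _); apply/seteqP; split => w /= h i; move: (h i); rewrite ffunE perm1 //.
- by move=> _; rewrite /pf /= /pushforward; apply: (le_lt_trans (probability_le1 _ _)) => //;
     [rewrite -[X in measurable X]setTI; apply: mdata | exact: ltry].
Qed.

Lemma exch_int sigma (g : Z -> \bar R) : measurable_fun [set: Z] g ->
  (forall z, 0 <= g z)%E ->
  (\int[P]_w g (dataf sigma w) = \int[P]_w g (dataf 1 w))%E.
Proof.
move=> mg g0.
have h1 := @ge0_integral_pushforward _ _ _ _ R _ (mdata sigma) P setT g measurableT mg (fun z _ => g0 z).
have h2 := @ge0_integral_pushforward _ _ _ _ R _ (mdata 1) P setT g measurableT mg (fun z _ => g0 z).
rewrite preimage_setT in h1 h2.
rewrite -[LHS]/(\int[P]_(w in setT) (g \o dataf sigma) w)%E -h1.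
rewrite -[RHS]/(\int[P]_(w in setT) (g \o dataf 1) w)%E -h2.
have := @eq_measure_integral _ Z R setT (pf (mdata 1)) (pf (mdata sigma)) g.
apply => A mA _; exact: exch_meas.
Qed.
End ZSpace.

Lemma ileE_big (R : realType) k (x : R) (P : pred 'I_k) (F : 'I_k -> R) :
  ileE x (\big[Order.max/-oo%E]_(r | P r) (F r)%:E) = ind [exists r, P r && (x <= F r)].
Proof.
rewrite /ileE; congr ind; apply/bigmax_geP/existsP.
  case; first by rewrite leNgt ltNye.
  by move=> [r Pr]; rewrite lee_fin => le; exists r; rewrite Pr.
by move=> [r /andP[Pr le]]; right; exists r => //; rewrite lee_fin.
Qed.

Lemma ind01 (R : realType) b : (ind b : R) = 0 \/ (ind b : R) = 1.
Proof. by case: b; [right|left]. Qed.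

Lemma ind_ge0 (R : realType) b : 0 <= (ind b : R).
Proof. by case: b => /=; rewrite ?ler01 ?lexx. Qed.

Section Q.
Variables (R : realType) (n m : nat) (c gamma : R).

Definition inC (j : 'I_m) (a : 'I_(n + m)) : bool := (a < n)%N || (a == rshift n j).

Definition FRv (Sv Lv : 'I_(n + m) -> R) j t : R :=
  (\sum_(a | inC j a) Lv a * ind (Sv a <= t))
  / (1 + \sum_(k < m | k != j) ind (Sv (rshift n k) <= t)) * (m%:R / (n.+1)%:R).

Definition Iv (Sv Lv : 'I_(n + m) -> R) j a : R :=
  ind [exists r, (FRv Sv Lv j (Sv r) <= gamma) && (Sv a <= Sv r)].

Definition Dv Sv Lv j := \sum_(a | inC j a) Lv a * Iv Sv Lv j a.

Definition qv Sv Lv j a := Lv a * Iv Sv Lv j a / Dv Sv Lv j.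

Lemma qv_sum Sv Lv j : \sum_(a | inC j a) qv Sv Lv j a <= 1.
Proof.
rewrite /qv -mulr_suml -/(Dv Sv Lv j).
have [->|D0] := eqVneq (Dv Sv Lv j) 0; first by rewrite invr0 mulr0 ler01.
by rewrite mulfV.
Qed.

Lemma inC_lshift j (i : 'I_n) : inC j (lshift m i).
Proof. by rewrite /inC /= ltn_ord. Qed.

Lemma inC_rshift j k : inC j (rshift n k) = (k == j).
Proof.
rewrite /inC /= ltnNge leq_addr /=.
apply/eqP/eqP => [/(congr1 val)/= /eqP|->//]; rewrite eqn_add2l => /eqP h.
exact: val_inj.
Qed.

Lemma sum_inC j (F : 'I_(n + m) -> R) :
  \sum_(a | inC j a) F a = F (rshift n j) + \sum_(i < n) F (lshift m i).
Proof.
rewrite big_split_ord /= addrC; congr (_ + _).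
  rewrite (eq_bigl (fun k => k == j)); first by rewrite big_pred1_eq.
  by move=> k; rewrite inC_rshift.
by apply: eq_bigl => i; rewrite inC_lshift.
Qed.

Section Perm.
Variables (j : 'I_m) (i : 'I_n).
Let tau := tperm (lshift m i) (rshift n j).

Lemma lr_neq (k : 'I_m) : (lshift m i == rshift n k) = false.
Proof. by apply/negbTE; apply/eqP => /(congr1 val) /= h; have := ltn_ord i; rewrite h ltnNge leq_addr. Qed.

Lemma inC_tau a : inC j (tau a) = inC j a.
Proof.
rewrite /tau; case: tpermP => [->|->|_ _].
- by rewrite inC_lshift inC_rshift eqxx.
- by rewrite inC_lshift inC_rshift eqxx.
- by [].
Qed.

Lemma sum_tau (F : 'I_(n + m) -> R) :
  \sum_(a | inC j a) F (tau a) = \sum_(a | inC j a) F a.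
Proof.
rewrite [RHS](reindex_inj (@perm_inj _ tau)) /=.
by apply: eq_bigl => a; rewrite inC_tau.
Qed.

Lemma tau_r (k : 'I_m) : k != j -> tau (rshift n k) = rshift n k.
Proof.
move=> kj; rewrite /tau tpermD //.
  by rewrite lr_neq.
apply/eqP => /(congr1 val) /= /eqP; rewrite eqn_add2l => /eqP h.
by move: kj; rewrite (val_inj h) eqxx.
Qed.

Lemma FRv_tau Sv Lv t : FRv (Sv \o tau) (Lv \o tau) j t = FRv Sv Lv j t.
Proof.
rewrite /FRv /= (sum_tau (fun a => Lv a * ind (Sv a <= t))).
congr (_ / (1 + _) * _); apply: eq_bigr => k kj; by rewrite tau_r.
Qed.

Lemma Iv_tau Sv Lv a : Iv (Sv \o tau) (Lv \o tau) j a = Iv Sv Lv j (tau a).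
Proof.
rewrite /Iv; congr ind; apply/existsP/existsP => -[r h].
  by exists (tau r); move: h; rewrite FRv_tau.
exists (tau r); rewrite FRv_tau /= tpermK //.
Qed.

Lemma Dv_tau Sv Lv : Dv (Sv \o tau) (Lv \o tau) j = Dv Sv Lv j.
Proof.
rewrite /Dv; under eq_bigr do rewrite Iv_tau.
exact: (sum_tau (fun a => Lv a * Iv Sv Lv j a)).
Qed.

Lemma qv_tau Sv Lv : qv (Sv \o tau) (Lv \o tau) j (rshift n j) = qv Sv Lv j (lshift m i).
Proof.
rewrite /qv Dv_tau Iv_tau /= /tau tpermR //.
Qed.
End Perm.

End Q.

Lemma ileE01 (R : realType) (x : R) t : ileE x t = 0 \/ ileE x t = 1.
Proof. exact: ind01. Qed.
Lemma ileE_ge0 (R : realType) (x : R) t : 0 <= ileE x t.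
Proof. exact: ind_ge0. Qed.
Lemma Lrisk_ge0 (R : realType) (c y : R) : 0 <= Lrisk c y.
Proof. exact: ind_ge0. Qed.

Section Link.
Variables (R : realType) (n m : nat) (c gamma : R).
Variables (S Y : 'I_(n + m) -> R).
Let Lv := fun a => Lrisk c (Y a).

Lemma FR_FRv j t : Lv (rshift n j) = 1 -> FR S Y c j t 1 = FRv S Lv j t.
Proof.
move=> L1; rewrite /FR /FRv sum_inC; congr (_ / _ * _); congr (_ + _).
by rewrite -/(Lv _) L1.
Qed.

Lemma thr_ileE j a : Lv (rshift n j) = 1 ->
  ileE (S a) (thr S Y c gamma j 1) = Iv gamma S Lv j a.
Proof.
move=> L1; rewrite /thr ileE_big /Iv; congr ind; apply: eq_existsb => r.
by rewrite FR_FRv.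
Qed.

Lemma den_ge (t : \bar R) j : ileE (S (rshift n j)) t <=
  1 * ileE (S (rshift n j)) t + \sum_(i < n) Lrisk c (Y (lshift m i)) * ileE (S (lshift m i)) t.
Proof.
rewrite mul1r lerDl; apply: sumr_ge0 => i _; apply: mulr_ge0; [exact: Lrisk_ge0|exact: ileE_ge0].
Qed.

Lemma Evalue_fin j : Evalue S Y c gamma j 1 = (fine (Evalue S Y c gamma j 1))%:E /\
  0 <= fine (Evalue S Y c gamma j 1).
Proof.
rewrite /Evalue /=; set t := thr S Y c gamma j 1.
have := den_ge t j.
case: (ileE01 (S (rshift n j)) t) => ->.
  by move=> _; rewrite mulr0 eqxx /= lexx.
move=> hd; rewrite mulr1 pnatr_eq0 /=.
have -> : (1 * 1 + \sum_(i < n) Lrisk c (Y (lshift m i)) * ileE (S (lshift m i)) t == 0) = false.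
  by apply/negbTE; rewrite gt_eqF // (lt_le_trans ltr01 hd).
split => //=; apply: divr_ge0 => //; exact: le_trans ler01 hd.
Qed.

Lemma Evalue_link j : Lv (rshift n j) * fine (Evalue S Y c gamma j 1) =
  n.+1%:R * qv gamma S Lv j (rshift n j).
Proof.
case: (@ind01 R (Y (rshift n j) <= c)) => L.
  by rewrite /qv /Lv /Lrisk L !mul0r mulr0.
have L1 : Lv (rshift n j) = 1 by [].
rewrite /qv L1 !mul1r /Evalue /=.
rewrite thr_ileE //.
have hD : Dv gamma S Lv j = 1 * Iv gamma S Lv j (rshift n j) +
    \sum_(i < n) Lrisk c (Y (lshift m i)) * ileE (S (lshift m i)) (thr S Y c gamma j 1).
  rewrite /Dv sum_inC L1; congr (_ + _); apply: eq_bigr => i _.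
  by rewrite thr_ileE.
rewrite -hD.
case: (@ind01 R [exists r, (FRv S Lv j (S r) <= gamma) && (S (rshift n j) <= S r)]) => I.
  by rewrite /Iv I mulr0 eqxx /= mul0r mulr0.
rewrite /Iv I mulr1 pnatr_eq0 /=.
have hD1 : 1 <= Dv gamma S Lv j.
  rewrite hD /Iv I mul1r lerDl; apply: sumr_ge0 => i _.
  apply: mulr_ge0; [exact: Lrisk_ge0|exact: ileE_ge0].
rewrite gt_eqF ?(lt_le_trans ltr01 hD1) //=.
by rewrite mul1r.
Qed.
End Link.

Lemma msumP d (T : measurableType d) (R : realType) (I : finType) (P : pred I) (h : I -> T -> R) :
  (forall i, measurable_fun [set: T] (h i)) ->
  measurable_fun [set: T] (fun z => \sum_(i | P i) h i z).
Proof.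
move=> mh.
rewrite (_ : (fun z => _) = (fun z => \sum_(i <- index_enum I) (if P i then h i z else 0))); last first.
  by apply/funext => z; rewrite big_mkcond.
apply: measurable_sum => i; case: (P i) => //; exact: measurable_cst.
Qed.

Section QMeas.
Variables (R : realType) (n m : nat) (c gamma : R).
Definition Sz (z : Z R (n + m)) := fun a => (z a).1.
Definition Lz (z : Z R (n + m)) := fun a => Lrisk c (z a).2.

Lemma mSz a : measurable_fun [set: Z R (n + m)] (fun z => Sz z a).
Proof. exact: mcoord1. Qed.

Lemma mLz a : measurable_fun [set: Z R (n + m)] (fun z => Lz z a).
Proof.
apply: mind; apply: measurable_fun_ler; [exact: mcoord2|exact: measurable_cst].
Qed.

Variable j : 'I_m.

Lemma mFRv r : measurable_fun [set: Z R (n + m)] (fun z => FRv (Sz z) (Lz z) j (Sz z r)).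
Proof.
rewrite /FRv; apply: measurable_funM; last exact: measurable_cst.
apply: measurable_funM.
  apply: msumP => a; apply: measurable_funM; first exact: mLz.
  by apply: mind; apply: measurable_fun_ler; exact: mSz.
apply: mfinv; apply: measurable_funD; first exact: measurable_cst.
apply: msumP => k; apply: mind; apply: measurable_fun_ler; exact: mSz.
Qed.

Lemma mIv a : measurable_fun [set: Z R (n + m)] (fun z => Iv gamma (Sz z) (Lz z) j a).
Proof.
apply: mind; apply: mexists => r; apply: measurable_and.
  by apply: measurable_fun_ler; [exact: mFRv|exact: measurable_cst].
by apply: measurable_fun_ler; exact: mSz.
Qed.

Lemma mqv a : measurable_fun [set: Z R (n + m)] (fun z => qv gamma (Sz z) (Lz z) j a).
Proof.
rewrite /qv /Dv; apply: measurable_funM.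
  by apply: measurable_funM; [exact: mLz|exact: mIv].
apply: mfinv; apply: msumP => b; apply: measurable_funM; [exact: mLz|exact: mIv].
Qed.

Lemma qv_ge0 z a : 0 <= qv gamma (Sz z) (Lz z) j a.
Proof.
have L0 : forall b, 0 <= Lz z b by move=> b; exact: Lrisk_ge0.
rewrite /qv /Dv; apply: mulr_ge0; first by apply: mulr_ge0; [exact: L0|exact: ind_ge0].
by rewrite invr_ge0; apply: sumr_ge0 => b _; apply: mulr_ge0; [exact: L0|exact: ind_ge0].
Qed.
End QMeas.
Local Close Scope classical_set_scope.

Lemma sum_ind_card (R : realType) (I : finType) (P : pred I) :
  \sum_(k : I) (ind (P k) : R) = #|[set k | P k]|%:R.
Proof.
rewrite /ind -natr_sum; congr _%:R.
rewrite -sum1_card [RHS]big_mkcond /=; apply: eq_bigr => k _; rewrite inE; by case: (P k).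
Qed.

Lemma alg1 (R : realType) (a b K M al : R) : 0 < a -> 0 < b -> 0 < K -> 0 < al ->
  a / b * (M / K) <= al -> M / (al * b) <= K / a.
Proof.
move=> a0 b0 K0 al0; rewrite mulf_div ler_pdivrMr ?mulr_gt0 // => h.
rewrite ler_pdivrMr ?mulr_gt0 // mulrAC ler_pdivlMr //.
lra.
Qed.
Lemma alg2 (R : realType) (a b K M al : R) : 0 < b -> 0 < K -> 0 < M ->
  a / b * (M / K) <= al -> a / K <= al * b / M.
Proof.
move=> b0 K0 M0; rewrite mulf_div ler_pdivrMr ?mulr_gt0 // => h.
rewrite ler_pdivrMr // mulrAC ler_pdivlMr //.
lra.
Qed.
Lemma alg3 (R : realType) (a b k K M al : R) : 0 < b -> 0 < K -> 0 < M -> 0 <= al ->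
  a / K <= al * k / M -> k <= b -> a / b * (M / K) <= al.
Proof.
move=> b0 K0 M0 al0; rewrite ler_pdivrMr // mulrAC ler_pdivlMr // => h kb.
rewrite mulf_div ler_pdivrMr ?mulr_gt0 //.
have : al * k * K <= al * b * K by rewrite ler_pM2r // ler_wpM2l.
lra.
Qed.

Section PartA.
Variables (R : realType) (T : Type) (s : T -> R) (c alpha : R) (n m : nat).
Variables (X : 'I_(n + m) -> T) (Y : 'I_(n + m) -> R).
Hypothesis a0 : 0 < alpha.

Definition SA i := s (X i).
Definition LA i := Lrisk c (Y i).
Definition Ncal t := \sum_(i < n) LA (lshift m i) * ind (SA (lshift m i) <= t).
Definition Rtest t : R := \sum_(k < m) ind (SA (rshift n k) <= t).
Definition Fv t := (1 + Ncal t) / Rtest t * (m%:R / (n.+1)%:R).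
Definition Cv t := (1 <= Rtest t) && (Fv t <= alpha).
Definition Ex x := [exists r, Cv (SA r) && (x <= SA r)].
Definition sel0 := [set j : 'I_m | Ex (SA (rshift n j))].
Definition Estar := n.+1%:R / (1 + \sum_(i < n) LA (lshift m i) * ind (Ex (SA (lshift m i)))).

Lemma Ncal_ge0 t : 0 <= Ncal t.
Proof. apply: sumr_ge0 => i _; apply: mulr_ge0; [exact: Lrisk_ge0|exact: ind_ge0]. Qed.

Lemma Rtest_card t : Rtest t = #|[set k : 'I_m | SA (rshift n k) <= t]|%:R.
Proof. exact: sum_ind_card. Qed.

Lemma FR_at j t : SA (rshift n j) <= t -> FR SA Y c j t 1 = Fv t.
Proof.
move=> le; rewrite /FR /Fv /Rtest [in RHS](bigD1 j) //= /ind le mul1r /Ncal /LA.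
by [].
Qed.

Lemma Ex_thr j x : Ex (SA (rshift n j)) ->
  ileE x (thr SA Y c alpha j 1) = ind (Ex x).
Proof.
move=> /existsP [r0 /andP [C0 le0]].
rewrite /thr ileE_big /Ex; congr ind; apply/existsP/existsP => -[r /andP [h1 h2]].
  have [le|lt] := leP (SA (rshift n j)) (SA r).
    exists r; rewrite h2 andbT /Cv -(FR_at le) h1 andbT.
    by rewrite Rtest_card ler1n card_gt0; apply/set0Pn; exists j; rewrite inE.
  by exists r0; rewrite C0 /=; exact: le_trans h2 (le_trans (ltW lt) le0).
have [le|lt] := leP (SA (rshift n j)) (SA r).
  by exists r; rewrite h2 andbT FR_at //; case/andP: h1.
exists r0; rewrite FR_at //; case/andP: C0 => _ -> /=.
exact: le_trans h2 (le_trans (ltW lt) le0).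
Qed.

Lemma nEx_thr j : ~~ Ex (SA (rshift n j)) ->
  ileE (SA (rshift n j)) (thr SA Y c alpha j 1) = 0.
Proof.
move=> nE; rewrite /thr ileE_big; case: existsP => [[r /andP [h1 h2]]|_]; last by [].
exfalso; move/negP: nE; apply; apply/existsP; exists r; rewrite h2 andbT /Cv.
rewrite -(FR_at h2) h1 andbT Rtest_card ler1n card_gt0.
by apply/set0Pn; exists j; rewrite inE.
Qed.

Lemma Estar_gt0 : 0 < Estar.
Proof.
rewrite /Estar divr_gt0 // ltr_wpDr // ?ltr01 //.
by apply: sumr_ge0 => i _; apply: mulr_ge0; [exact: Lrisk_ge0|exact: ind_ge0].
Qed.

Lemma Evalue_char j : Evalue SA Y c alpha j 1 =
  if Ex (SA (rshift n j)) then Estar%:E else 0%E.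
Proof.
rewrite /Evalue /=; case E: (Ex (SA (rshift n j))).
  have h : forall x, ileE x (thr SA Y c alpha j 1) = ind (Ex x).
    by move=> x; apply: Ex_thr; rewrite E.
  rewrite h; under eq_bigr do rewrite h.
  rewrite E (_ : ind true = 1) // mulr1 pnatr_eq0 /= mul1r.
  rewrite gt_eqF //; apply: ltr_wpDr; last exact: ltr01.
  by apply: sumr_ge0 => i _; apply: mulr_ge0; [exact: Lrisk_ge0|exact: ind_ge0].
by rewrite nEx_thr ?E // mulr0 eqxx.
Qed.

Lemma argmax_C : (exists r, Cv (SA r)) ->
  exists rs, Cv (SA rs) /\ forall x, Ex x = (x <= SA rs).
Proof.
move=> [r0 C0]; have [rs Crs hmax] := @arg_maxP _ _ _ r0 (fun r => Cv (SA r)) SA C0.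
exists rs; split => // x; apply/existsP/idP.
  by move=> [r /andP [Cr le]]; exact: le_trans le (hmax r Cr).
by move=> le; exists rs; rewrite Crs le.
Qed.

Lemma pconf_eq j : pconf s c X Y j = (1 + Ncal (SA (rshift n j))) / n.+1%:R.
Proof.
rewrite /pconf /Ncal; congr ((1 + _) / _); apply: eq_bigr => i _.
rewrite /Vscore ltxx /LA /Lrisk /SA; case: (ltP c (Y (lshift m i))) => h.
  by rewrite /ind /= mul0r.
by rewrite lee_fin /ind /= mul1r.
Qed.

Lemma Ncal_le t1 t2 : t1 <= t2 -> Ncal t1 <= Ncal t2.
Proof.
move=> le; apply: ler_sum => i _; apply: ler_wpM2l; first exact: Lrisk_ge0.
rewrite /ind; case: (boolP (SA (lshift m i) <= t1)) => h.
  by rewrite (le_trans h le).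
exact: ind_ge0.
Qed.

Lemma sel0_rs rs : (forall x, Ex x = (x <= SA rs)) ->
  #|sel0|%:R = Rtest (SA rs).
Proof.
move=> h; rewrite Rtest_card; congr _%:R; apply: eq_card => k.
by rewrite !inE h.
Qed.

Lemma sel0_ex j : j \in sel0 -> exists rs, Cv (SA rs) /\ forall x, Ex x = (x <= SA rs).
Proof.
rewrite inE => /existsP [r /andP [Cr _]]; apply: argmax_C; by exists r.
Qed.

Lemma m_gt0 (j : 'I_m) : (0 < m)%N.
Proof. by case: m j => // -[]. Qed.

Lemma A7 j : j \in sel0 -> m%:R / (alpha * #|sel0|%:R) <= Estar.
Proof.
move=> /sel0_ex [rs [Crs h]].
rewrite (sel0_rs h) /Estar.
have -> : \sum_(i < n) LA (lshift m i) * ind (Ex (SA (lshift m i))) = Ncal (SA rs).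
  by apply: eq_bigr => i _; rewrite h.
case/andP: Crs => b1 hF.
apply: alg1 => //.
- by apply: ltr_wpDr; [exact: Ncal_ge0|exact: ltr01].
- exact: lt_le_trans ltr01 b1.
Qed.

Lemma A8 j : j \in sel0 -> pconf s c X Y j <= alpha * #|sel0|%:R / m%:R.
Proof.
move=> jin; have /sel0_ex [rs [Crs h]] := jin.
rewrite pconf_eq (sel0_rs h).
move: jin; rewrite inE h => le.
apply: le_trans (_ : (1 + Ncal (SA rs)) / n.+1%:R <= _).
  by rewrite ler_pM2r ?invr_gt0 // lerD2l; exact: Ncal_le.
case/andP: Crs => b1 hF.
apply: alg2 => //.
- exact: lt_le_trans ltr01 b1.
- by rewrite ltr0n; exact: m_gt0 j.
Qed.

Lemma A9 k : (0 < k)%N ->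
  (k <= #|[set j | (pconf s c X Y j <= alpha * k%:R / m%:R)%R]|)%N ->
  [set j | pconf s c X Y j <= alpha * k%:R / m%:R] \subset sel0.
Proof.
move=> k0 kle.
set A := [set j | _].
have : (0 < #|A|)%N by exact: leq_trans k0 kle.
rewrite card_gt0 => /set0Pn [j1 j1A].
have [j0 j0A hmax] := @arg_maxP _ _ _ j1 (mem A) (fun j => SA (rshift n j)) j1A.
have mpos : (0 < m)%N by exact: m_gt0 j0.
set t := SA (rshift n j0).
have hb : (k%:R <= Rtest t)%R.
  rewrite Rtest_card ler_nat (leq_trans kle) //; apply: subset_leq_card.
  by apply/fintype.subsetP => j jA; rewrite inE; exact: (hmax j jA).
have Ct : Cv t.
  rewrite /Cv (le_trans _ hb) ?ler1n //=.
  have : j0 \in A := j0A.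
  rewrite inE pconf_eq => hp.
  apply: (alg3 _ _ _ _ hp hb) => //.
  - by apply: lt_le_trans hb; rewrite ltr0n.
  - by rewrite ltr0n.
  - exact: ltW.
apply/fintype.subsetP => j jA; rewrite inE; apply/existsP; exists (rshift n j0).
by rewrite Ct; exact: hmax.
Qed.

End PartA.

Lemma bigmax_ord_eq k (P : pred 'I_k) (t0 : 'I_k) : P t0 ->
  (forall t, P t -> (t <= t0)%N) -> (\max_(t < k | P t) t)%N = t0.
Proof.
move=> Pt0 h; apply/eqP; rewrite eqn_leq; apply/andP; split.
  by apply/bigmax_leqP => t; exact: h.
by apply: (@leq_bigmax_cond _ P (fun t : 'I_k => nat_of_ord t) t0 Pt0).
Qed.

Lemma bigmax_ord_0 k (P : pred 'I_k) : (forall t, ~~ P t) -> (\max_(t < k | P t) t)%N = 0%N.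
Proof. by move=> h; rewrite big_pred0 // => t; exact/negbTE. Qed.

Section PartA2.
Variables (R : realType) (T : Type) (s : T -> R) (c alpha : R) (n m : nat).
Variables (X : 'I_(n + m) -> T) (Y : 'I_(n + m) -> R).
Hypothesis a0 : 0 < alpha.

Let E := fun j => Evalue (SA s X) Y c alpha j 1.
Let sel := sel0 s c alpha X Y.

Lemma Esel (tau : nat) : (0 < m)%N -> (0 < tau)%N ->
  [set j | ((m%:R / (alpha * tau%:R))%:E <= E j)%E] =
  if m%:R / (alpha * tau%:R) <= Estar s c alpha X Y then sel else finset.set0.
Proof.
move=> m0 t0; apply/setP => j; rewrite /E inE Evalue_char.
have hp : 0 < m%:R / (alpha * tau%:R) :> R by rewrite divr_gt0 ?mulr_gt0 ?ltr0n.
case: ifP => h; case: ifP => h2.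
- by rewrite lee_fin h2 /sel /sel0 inE h.
- by rewrite lee_fin h2 inE.
- by rewrite (_ : 0%E = (0:R)%:E) // lee_fin leNgt hp /sel /sel0 inE h.
- by rewrite (_ : 0%E = (0:R)%:E) // lee_fin leNgt hp inE.
Qed.

Lemma ebh_eq_bh : ebh_sel alpha E = bh_sel alpha (pconf s c X Y).
Proof.
rewrite /ebh_sel /bh_sel.
have [m0|mpos] := posnP m.
  by apply/setP => j; have := ltn_ord j; rewrite {2}m0.
have [S0|[j0 j0in]] := set_0Vmem sel.
- have et : ebh_tau alpha E = 0%N.
    apply: bigmax_ord_0 => t; apply/negP => /andP [t0].
    by rewrite (Esel mpos t0); case: ifP => _; rewrite ?S0 cards0 leqNgt t0.
  have bk : bh_k alpha (pconf s c X Y) = 0%N.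
    apply: bigmax_ord_0 => t; apply/negP => /andP [t0 tle].
    have := A9 a0 t0 tle; rewrite -/sel S0 finset.subset0 => /eqP e.
    by move: tle; rewrite e cards0 leqNgt t0.
  by rewrite et bk.
- set Rs := #|sel|.
  have Rs0 : (0 < Rs)%N by rewrite card_gt0; apply/set0Pn; exists j0.
  have Rsm : (Rs < m.+1)%N by rewrite ltnS /Rs (leq_trans (max_card _)) // card_ord.
  have hE : m%:R / (alpha * Rs%:R) <= Estar s c alpha X Y := A7 a0 j0in.
  have et : ebh_tau alpha E = Rs.
    apply: (@bigmax_ord_eq _ _ (Ordinal Rsm)) => /=.
      by rewrite Rs0 /= (Esel mpos Rs0) hE.
    move=> t /andP [t0 tle]; apply: leq_trans tle _.
    rewrite (Esel mpos t0); case: ifP => _; first by [].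
    by rewrite cards0.
  have sub : sel \subset [set j | pconf s c X Y j <= alpha * Rs%:R / m%:R].
    by apply/fintype.subsetP => j jin; rewrite inE; exact: A8.
  have bk : bh_k alpha (pconf s c X Y) = Rs.
    apply: (@bigmax_ord_eq _ _ (Ordinal Rsm)) => /=.
      by rewrite Rs0 /= (subset_leq_card sub).
    move=> t /andP [t0 tle]; have := A9 a0 t0 tle => /subset_leq_card.
    exact: leq_trans tle.
  rewrite et bk gtn_eqF // (Esel mpos Rs0) hE.
  apply/eqP; rewrite finset.eqEsubset sub /=.
  apply: A9 => //; exact: subset_leq_card sub.
Qed.
End PartA2.

Lemma ebh_tau_spec (R : realType) m (alpha : R) (E : 'I_m -> \bar R) :
  let t := ebh_tau alpha E in
  t = 0%N \/ ((0 < t)%N && (t <= #|[set j | ((m%:R / (alpha * t%:R))%:E <= E j)%E]|)%N).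
Proof.
rewrite /ebh_tau; elim/big_rec: _ => [|t x Pt IH]; first by left.
by case: (leqP t x) => h; [|right].
Qed.

Lemma fdp_bound (R : realType) m (alpha : R) (L e : 'I_m -> R) : 0 < alpha ->
  (forall j, 0 <= L j) -> (forall j, 0 <= e j) ->
  fdp L (ebh_sel alpha (fun j => (e j)%:E)) <= alpha / m%:R * \sum_j L j * e j.
Proof.
move=> a0 L0 e0.
have rhs0 : 0 <= alpha / m%:R * \sum_j L j * e j.
  apply: mulr_ge0; first by apply: divr_ge0 => //; exact: ltW.
  by apply: sumr_ge0 => j _; apply: mulr_ge0.
rewrite /ebh_sel; case: eqP => [_|tn0]; first by rewrite /fdp big_set0 mul0r.
have := ebh_tau_spec alpha (fun j => (e j)%:E).
set t := ebh_tau _ _; case => [//|/andP [t0 tle]].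
set Sel := [set j | _] in tle *.
have Km : (#|Sel| <= m)%N by rewrite (leq_trans (max_card _)) // card_ord.
have m0 : (0 < m)%N by apply: leq_trans Km; exact: leq_trans tle.
have Kt : t%:R <= #|Sel|%:R :> R by rewrite ler_nat.
have Kp : 0 < #|Sel|%:R :> R by rewrite ltr0n (leq_trans t0 tle).
rewrite /fdp max_r; last by rewrite ler1n (leq_trans t0 tle).
set A := \sum_(j in Sel) L j.
set B := \sum_(j in Sel) L j * e j.
set C := \sum_j L j * e j.
have mR : 0 < m%:R :> R by rewrite ltr0n.
have tR : 0 < t%:R :> R by rewrite ltr0n.
have h1 : A <= alpha * t%:R / m%:R * B.
  rewrite /A /B mulr_sumr; apply: ler_sum => j; rewrite inE lee_fin => hj.
  have : 1 <= e j * (alpha * t%:R / m%:R).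
    move: hj; rewrite ler_pdivrMr ?mulr_gt0 // => hj.
    by rewrite mulrA ler_pdivlMr // mul1r.
  move=> h; have := ler_wpM2l (L0 j) h; rewrite mulr1 => h'.
  apply: (le_trans h'); rewrite le_eqVlt; apply/orP; left; apply/eqP; ring.
have h2 : B <= C.
  rewrite /B /C [X in _ <= X](bigID (fun j => j \in Sel)) /= lerDl.
  by apply: sumr_ge0 => j _; apply: mulr_ge0.
have B0 : 0 <= B by apply: sumr_ge0 => j _; apply: mulr_ge0.
rewrite ler_pdivrMr //; apply: (le_trans h1).
have -> : alpha * t%:R / m%:R * B = alpha / m%:R * (t%:R * B) by ring.
have -> : alpha / m%:R * C * #|Sel|%:R = alpha / m%:R * (#|Sel|%:R * C) by ring.
apply: ler_wpM2l; first by apply: divr_ge0 => //; exact: ltW.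
apply: ler_pM => //; exact: ltW.
Qed.

Local Open Scope classical_set_scope.

Lemma le_int_nm d (T : measurableType d) (R : realType) (mu : {measure set T -> \bar R})
  (f1 f2 : T -> \bar R) :
  (forall x, 0 <= f1 x)%E -> (forall x, f1 x <= f2 x)%E ->
  (\int[mu]_x f1 x <= \int[mu]_x f2 x)%E.
Proof.
move=> f10 f12; have f20 : forall x, (0 <= f2 x)%E by move=> x; exact: le_trans (f10 x) (f12 x).
rewrite !ge0_integralTE //; apply: ereal_sup_le => _ [h hf <-]; exists h => //= x.
exact: le_trans (hf x) (f12 x).
Qed.

Section Expect.
Variables (R : realType) (n m : nat) (c gamma : R).
Variables (d : measure_display) (Omega : measurableType d) (P : probability Omega R).
Variables (dX : measure_display) (X : measurableType dX).
Variables (Xd : 'I_(n + m) -> Omega -> X) (Yd : 'I_(n + m) -> Omega -> R) (s : X -> R).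
Hypothesis mXd : forall i, measurable_fun [set: Omega] (Xd i).
Hypothesis mYd : forall i, measurable_fun [set: Omega] (Yd i).
Hypothesis ms : measurable_fun [set: X] s.
Hypothesis exch : exchangeable P Xd Yd.

Definition qw (j : 'I_m) (a : 'I_(n + m)) (w : Omega) : R :=
  qv gamma (@Sz R n m (dataf Xd Yd s 1 w)) (@Lz R n m c (dataf Xd Yd s 1 w)) j a.

Lemma mqw j a : measurable_fun [set: Omega] (qw j a).
Proof. exact: measurableT_comp (mqv c gamma j a) (mdata mXd mYd ms 1). Qed.

Lemma qw_ge0 j a w : 0 <= qw j a w.
Proof. exact: qv_ge0. Qed.

Lemma int_eq j (i : 'I_n) :
  (\int[P]_w (qw j (lshift m i) w)%:E = \int[P]_w (qw j (rshift n j) w)%:E)%E.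
Proof.
set tau := tperm (lshift m i) (rshift n j).
pose g := fun z : Z R (n + m) => (qv gamma (@Sz R n m z) (@Lz R n m c z) j (rshift n j))%:E.
transitivity (\int[P]_w g (dataf Xd Yd s tau w))%E.
  apply: eq_integral => w _; rewrite /g /qw; congr _%:E.
  have -> : @Sz R n m (dataf Xd Yd s tau w) = @Sz R n m (dataf Xd Yd s 1 w) \o tau.
    by apply/funext => a; rewrite /Sz /dataf /= !ffunE perm1.
  have -> : @Lz R n m c (dataf Xd Yd s tau w) = @Lz R n m c (dataf Xd Yd s 1 w) \o tau.
    by apply/funext => a; rewrite /Lz /dataf /= !ffunE perm1.
  by rewrite qv_tau.
rewrite (exch_int mXd mYd ms exch tau).
- by [].
- by apply/measurable_EFinP; exact: mqv.
- by move=> z; rewrite /g lee_fin; exact: qv_ge0.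
Qed.

Lemma int_q j : (n.+1%:R%:E * \int[P]_w (qw j (rshift n j) w)%:E <= 1)%E.
Proof.
have hs : (\int[P]_w (\sum_(a | inC j a) qw j a w)%:E <= 1)%E.
  apply: le_trans (_ : \int[P]_w (cst 1%E w) <= 1)%E.
    apply: le_int_nm => w; first by rewrite lee_fin; apply: sumr_ge0 => a _; exact: qw_ge0.
    by rewrite /= lee_fin; exact: qv_sum.
  by rewrite integral_cst // mul1e probability_le1.
move: hs; under eq_integral do rewrite sum_inC EFinD -sumEFin.
rewrite ge0_integralD //; first last.
- by apply: emeasurable_sum => i; apply/measurable_EFinP; exact: mqw.
- by move=> w _; apply: sume_ge0 => i _; rewrite lee_fin; exact: qw_ge0.
- by apply/measurable_EFinP; exact: mqw.
- by move=> w _; rewrite lee_fin; exact: qw_ge0.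
rewrite ge0_integral_sum //; first last.
- by move=> i w _; rewrite lee_fin; exact: qw_ge0.
- by move=> i; apply/measurable_EFinP; exact: mqw.
under eq_bigr do rewrite int_eq.
by rewrite sumr_const card_ord mule_natl muleS.
Qed.
End Expect.

Lemma fdp_ge0 (R : realType) m (L : 'I_m -> R) Sel : (forall j, 0 <= L j) -> 0 <= fdp L Sel.
Proof.
move=> L0; rewrite /fdp; apply: divr_ge0; first by apply: sumr_ge0.
by rewrite le_max ler01.
Qed.

Theorem corollary5p1 (R : realType) (d : measure_display)
  (Omega : measurableType d) (P : probability Omega R)
  (dX : measure_display) (X : measurableType dX) (n m : nat)
  (Xd : 'I_(n + m) -> Omega -> X) (Yd : 'I_(n + m) -> Omega -> R)
  (s : X -> R) (c gamma alpha : R) :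
  (forall i, measurable_fun setT (Xd i)) ->
  (forall i, measurable_fun setT (Yd i)) ->
  exchangeable P Xd Yd ->
  measurable_fun setT s -> (forall x, 0 <= s x <= 1) ->
  0 < gamma -> 0 < alpha < 1 ->
  let Sel := fun w => ebh_sel alpha
        (fun j => Evalue (fun i => s (Xd i w)) (fun i => Yd i w) c gamma j 1) in
  (\int[P]_w (fdp (fun j => Lrisk c (Yd (rshift n j) w)) (Sel w))%:E
     <= alpha%:E)%E
  /\
  (gamma = alpha -> forall w,
     Sel w = bh_sel alpha (pconf s c (fun i => Xd i w) (fun i => Yd i w))).
Proof.
move=> mXd mYd exch ms _ g0 /andP [a0 _] Sel; split; last first.
  move=> ga w; rewrite /Sel ga.
  exact: (ebh_eq_bh s c (fun i => Xd i w) (fun i => Yd i w) a0).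
pose k := alpha / m%:R * n.+1%:R.
have k0 : 0 <= k by apply: mulr_ge0 => //; apply: divr_ge0 => //; exact: ltW.
have hpt : forall w, ((fdp (fun j => Lrisk c (Yd (rshift n j) w)) (Sel w))%:E <=
    \sum_(j < m) (k * qw c gamma Xd Yd s j (rshift n j) w)%:E)%E.
  move=> w; rewrite sumEFin lee_fin.
  set S := fun i => s (Xd i w); set Y := fun i => Yd i w.
  pose e := fun j => fine (Evalue S Y c gamma j 1).
  have -> : Sel w = ebh_sel alpha (fun j => (e j)%:E).
    rewrite /Sel; congr ebh_sel; apply/funext => j.
    by rewrite /e -(Evalue_fin c gamma S Y j).1.
  have L0 : forall j, 0 <= Lrisk c (Yd (rshift n j) w) by move=> j; exact: Lrisk_ge0.
  have e0 : forall j, 0 <= e j by move=> j; exact: (Evalue_fin c gamma S Y j).2.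
  apply: le_trans (fdp_bound a0 L0 e0) _.
  rewrite mulr_sumr; apply: ler_sum => j _.
  have -> : Lrisk c (Yd (rshift n j) w) * e j = n.+1%:R * qv gamma S (fun a => Lrisk c (Y a)) j (rshift n j).
    exact: (Evalue_link c gamma S Y j).
  have -> : qv gamma S (fun a => Lrisk c (Y a)) j (rshift n j) = qw c gamma Xd Yd s j (rshift n j) w.
    rewrite /qw; congr qv; apply/funext => a; by rewrite /Sz /Lz /dataf /= ffunE perm1.
  by rewrite /k mulrA.
apply: le_trans (le_int_nm _ _ hpt) _.
  by move=> w; rewrite lee_fin; apply: fdp_ge0 => j; exact: Lrisk_ge0.
rewrite ge0_integral_sum //; first last.
- by move=> j w _; rewrite lee_fin; apply: mulr_ge0 => //; exact: qw_ge0.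
- move=> j; apply/measurable_EFinP; apply: measurable_funM; first exact: measurable_cst.
  exact: (mqw c gamma mXd mYd ms).
apply: le_trans (_ : (\sum_(j < m) (alpha / m%:R)%:E <= alpha%:E)%E).
  apply: lee_sum => j _.
  under eq_integral do rewrite EFinM.
  rewrite ge0_integralZl_EFin //; first last.
  - by apply/measurable_EFinP; exact: (mqw c gamma mXd mYd ms).
  - by move=> w _; rewrite lee_fin; exact: qw_ge0.
  rewrite /k EFinM -muleA.
  rewrite -[X in (_ <= X)%E]mule1.
  apply: lee_wpmul2l; first by rewrite lee_fin; apply: divr_ge0 => //; exact: ltW.
  exact: (int_q c gamma mXd mYd ms exch).
rewrite sumEFin lee_fin sumr_const card_ord.
have [->|mpos] := posnP m; first by rewrite mulr0n; exact: ltW.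
have -> : (alpha / m%:R) *+ m = alpha / m%:R * m%:R by rewrite mulr_natr.
by rewrite mulfVK // pnatr_eq0 -lt0n.
Qed.
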